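(* Let $(H,A,C)$ be a Doi-Hopf datum with $H$ a Hopf algebra, and let $\nu:GF\to 1_{\mathcal C}$ be a natural transformation. Then for every Doi-Hopf module $M$, every $m\in M$ and $c\in C$, $$\nu_M(c\otimes m)=\sum m_{<0>}\cdot\Big((\varepsilon_C\otimes I_A)\,\nu_{C\otimes A}(c\otimes m_{<-1>}\otimes 1_A)\Big).$$ In particular $\nu$ is completely determined by $\nu_{C\otimes A}:C\otimes C\otimes A\to C\otimes A$.
   Context: $k$ is a commutative ring; all (co)algebras, tensor products and maps are over $k$. Sweedler notation: $\Delta(c)=\sum c_{(1)}\otimes c_{(2)}$; for a left comodule, $\rho(m)=\sum m_{<-1>}\otimes m_{<0>}$. A Doi-Hopf datum $(H,A,C)$: $H$ a bialgebra, $A$ a left $H$-comodule algebra (coaction $\rho_A$ an algebra map), $C$ a right $H$-module coalgebra ($\Delta(c\cdot h)=\sum c_{(1)}\cdot h_{(1)}\otimes c_{(2)}\cdot h_{(2)}$, $\varepsilon(c\cdot h)=\varepsilon(c)\varepsilon(h)$), $C$ flat over $k$. A Doi-Hopf module is a right $A$-module $M$ with left $C$-coaction $\rho_M$ such that $\rho_M(ma)=\sum m_{<-1>}\cdot a_{<-1>}\otimes m_{<0>}a_{<0>}$; $\mathcal C={}^C\mathcal M(H)_A$ is their category with $A$-linear $C$-colinear maps. $F:\mathcal C\to\mathcal M_A$ forgets the coaction; its right adjoint is $G(N)=C\otimes N$ with $(c\otimes n)a=\sum c\cdot a_{<-1>}\otimes na_{<0>}$ and $\rho(c\otimes n)=\sum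 c_{(1)}\otimes c_{(2)}\otimes n$; so $GF(M)=C\otimes M$ and a natural transformation $\nu:GF\to 1_{\mathcal C}$ is a family of morphisms $\nu_M:C\otimes M\to M$ in $\mathcal C$, natural in $M$. *)

(* Defs.v *)
From HB Require Import structures.
From mathcomp Require Import all_boot all_algebra.
From mathcomp Require Import boolp.
Set Implicit Arguments. Unset Strict Implicit. Unset Printing Implicit Defensive.
Import GRing.Theory.
Local Open Scope ring_scope.
Local Open Scope quotient_scope.

Section Tensor.
Variables (R : comPzRingType) (U V : lmodType R).

Definition bilinear_map (W : lmodType R) (f : U -> V -> W) : Prop :=
  (forall (a : R) u u' v, f (a *: u + u') v = a *: f u v + f u' v) /\
  (forall (a : R) u v v', f u (a *: v + v') = a *: f u v + f u v').

Definition tpre := seq (U * V).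
Definition tsum (W : zmodType) (f : U -> V -> W) (s : tpre) : W :=
  \sum_(p <- s) f p.1 p.2.

Definition tequiv (s t : tpre) : bool :=
  `[< forall (W : lmodType R) (f : U -> V -> W), bilinear_map f ->
        tsum f s = tsum f t >].

Lemma tequiv_refl : reflexive tequiv.
Proof. by move=> s; apply/asboolP. Qed.
Lemma tequiv_sym : symmetric tequiv.
Proof.
by move=> s t; apply/asboolP/asboolP => H W f bf; rewrite H.
Qed.
Lemma tequiv_trans : transitive tequiv.
Proof.
move=> t s u /asboolP H1 /asboolP H2; apply/asboolP => W f bf.
by rewrite H1 // H2.
Qed.

Definition tequiv_rel := EquivRel tequiv tequiv_refl tequiv_sym tequiv_trans.
Definition tensor := {eq_quot tequiv_rel}.
HB.instance Definition _ := Choice.on tensor.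
HB.instance Definition _ := EqQuotient.on tensor.

Definition tlift (W : zmodType) (f : U -> V -> W) (x : tensor) : W :=
  tsum f (repr x).
Definition tmul (u : U) (v : V) : tensor := \pi_tensor [:: (u, v)].

Definition tzero : tensor := \pi_tensor [::].
Definition tadd (x y : tensor) : tensor := \pi_tensor (repr x ++ repr y).
Definition topp (x : tensor) : tensor :=
  \pi_tensor (map (fun p => (- p.1, p.2)) (repr x)).
Definition tscale (a : R) (x : tensor) : tensor :=
  \pi_tensor (map (fun p => (a *: p.1, p.2)) (repr x)).

Lemma tsum_pi (W : lmodType R) (f : U -> V -> W) s :
  bilinear_map f -> tsum f (repr (\pi_tensor s)) = tsum f s.
Proof.
move=> bf; have : tequiv_rel (repr (\pi_tensor s)) s.
  by apply/eqmodP; rewrite reprK.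
by move/asboolP; apply.
Qed.

Lemma tensor_ext (x y : tensor) :
  (forall (W : lmodType R) (f : U -> V -> W), bilinear_map f ->
     tlift f x = tlift f y) -> x = y.
Proof.
by move=> H; rewrite -[x]reprK -[y]reprK; apply/eqmodP; apply/asboolP.
Qed.

Section BilinFacts.
Variables (W : lmodType R) (f : U -> V -> W).
Hypothesis bf : bilinear_map f.
Lemma bil0l v : f 0 v = 0.
Proof.
case: bf => H _; have := H 1 0 0 v; rewrite scale1r addr0 scale1r => E.
by apply: (addrI (f 0 v)); rewrite addr0 -E.
Qed.
Lemma bilZl a u v : f (a *: u) v = a *: f u v.
Proof. by case: bf => H _; rewrite -[a *: u]addr0 H bil0l addr0. Qed.
Lemma bilNl u v : f (- u) v = - f u v.
Proof. by rewrite -scaleN1r bilZl scaleN1r. Qed.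
End BilinFacts.

Lemma tliftD (W : lmodType R) (f : U -> V -> W) x y : bilinear_map f ->
  tlift f (tadd x y) = tlift f x + tlift f y.
Proof. by move=> bf; rewrite /tlift /tadd tsum_pi // /tsum big_cat. Qed.
Lemma tlift0 (W : lmodType R) (f : U -> V -> W) : bilinear_map f ->
  tlift f tzero = 0.
Proof. by move=> bf; rewrite /tlift /tzero tsum_pi // /tsum big_nil. Qed.
Lemma tliftN (W : lmodType R) (f : U -> V -> W) x : bilinear_map f ->
  tlift f (topp x) = - tlift f x.
Proof.
move=> bf; rewrite /tlift /topp tsum_pi // /tsum big_map -sumrN.
by apply: eq_bigr => p _ /=; rewrite bilNl.
Qed.
Lemma tliftZ (W : lmodType R) (f : U -> V -> W) a x : bilinear_map f ->
  tlift f (tscale a x) = a *: tlift f x.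
Proof.
move=> bf; rewrite /tlift /tscale tsum_pi // /tsum big_map scaler_sumr.
by apply: eq_bigr => p _ /=; rewrite bilZl.
Qed.

Lemma taddA : associative tadd.
Proof. by move=> x y z; apply: tensor_ext => W f bf; rewrite !tliftD // addrA. Qed.
Lemma taddC : commutative tadd.
Proof. by move=> x y; apply: tensor_ext => W f bf; rewrite !tliftD // addrC. Qed.
Lemma tadd0 : left_id tzero tadd.
Proof. by move=> x; apply: tensor_ext => W f bf; rewrite !tliftD // tlift0 // add0r. Qed.
Lemma taddN : left_inverse tzero topp tadd.
Proof.
by move=> x; apply: tensor_ext => W f bf; rewrite tliftD // tliftN // tlift0 // addNr.
Qed.

HB.instance Definition _ := GRing.isZmodule.Build tensor taddA taddC tadd0 taddN.

Lemma tscaleA a b x : tscale a (tscale b x) = tscale (a * b) x.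
Proof. by apply: tensor_ext => W f bf; rewrite !tliftZ // scalerA. Qed.
Lemma tscale1 : left_id 1 tscale.
Proof. by move=> x; apply: tensor_ext => W f bf; rewrite !tliftZ // scale1r. Qed.
Lemma tscaleDr : right_distributive tscale +%R.
Proof.
by move=> a x y; apply: tensor_ext => W f bf; rewrite /= tliftZ // !tliftD // !tliftZ // scalerDr.
Qed.
Lemma tscaleDl x : {morph tscale^~ x : a b / a + b}.
Proof.
by move=> a b; apply: tensor_ext => W f bf; rewrite /= tliftD // !tliftZ // scalerDl.
Qed.

HB.instance Definition _ := GRing.Zmodule_isLmodule.Build R tensor
  tscaleA tscale1 tscaleDr tscaleDl.

End Tensor.
Arguments tmul {R U V}.
Arguments tlift {R U V W}.

Notation "u \ot v" := (tmul u v) (at level 41, right associativity).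

(* Hopf-algebraic notions (Sweedler sums are written with tlift:       *)
(*   tlift f x = sum f x_i y_i  for  x = sum x_i \ot y_i)             *)
Section DoiHopf.
Variable k : comPzRingType.

Definition klinear (U V : lmodType k) (f : U -> V) : Prop :=
  forall (a : k) x y, f (a *: x + y) = a *: f x + f y.
Definition kform (U : lmodType k) (f : U -> k) : Prop :=
  forall (a : k) x y, f (a *: x + y) = a * f x + f y.

Definition tmap (U V U' V' : lmodType k) (f : U -> U') (g : V -> V')
  (x : tensor U V) : tensor U' V' := tlift (fun u v => f u \ot g v) x.

(* coalgebras: coassociativity (up to the canonical associator, we use
   right-nested tensors C (x) (C (x) C)) and counit *)
Definition is_coalgebra (C : lmodType k) (D : C -> tensor C C) (e : C -> k) :=
  [/\ klinear D, kform e,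
      forall c, tlift (fun c1 c2 => tlift (fun d1 d2 => d1 \ot (d2 \ot c2)) (D c1)) (D c)
              = tlift (fun c1 c2 => c1 \ot D c2) (D c),
      forall c, tlift (fun c1 c2 => e c1 *: c2) (D c) = c &
      forall c, tlift (fun c1 c2 => e c2 *: c1) (D c) = c].

Definition talgmul (P Q : algType k) (x y : tensor P Q) : tensor P Q :=
  tlift (fun a b => tlift (fun a' b' => (a * a') \ot (b * b')) y) x.

Definition is_bialgebra (H : algType k) (D : H -> tensor H H) (e : H -> k) :=
  [/\ is_coalgebra D e,
      forall g h, D (g * h) = talgmul (D g) (D h),
      D 1 = 1 \ot 1,
      forall g h, e (g * h) = e g * e h &
      e 1 = 1].

Definition is_antipode (H : algType k) (D : H -> tensor H H) (e : H -> k)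
  (S : H -> H) :=
  klinear S /\
  forall h, tlift (fun a b => S a * b) (D h) = (e h)%:A /\
            tlift (fun a b => a * S b) (D h) = (e h)%:A.

Definition is_hopf (H : algType k) (D : H -> tensor H H) (e : H -> k) :=
  is_bialgebra D e /\ exists S, is_antipode D e S.

Definition is_left_comodule (C : lmodType k) (D : C -> tensor C C) (e : C -> k)
  (M : lmodType k) (rho : M -> tensor C M) :=
  [/\ klinear rho,
      forall m, tlift (fun c n => tlift (fun c1 c2 => c1 \ot (c2 \ot n)) (D c)) (rho m)
              = tlift (fun c n => c \ot rho n) (rho m) &
      forall m, tlift (fun c n => e c *: n) (rho m) = m].

Definition is_right_module (A : algType k) (M : lmodType k) (act : M -> A -> M) :=
  [/\ forall (t : k) m m' a, act (t *: m + m') a = t *: act m a + act m' a,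
      forall (t : k) m a b, act m (t *: a + b) = t *: act m a + act m b,
      forall m a b, act m (a * b) = act (act m a) b &
      forall m, act m 1 = m].

Definition is_comodule_algebra (H : algType k) (DH : H -> tensor H H) (eH : H -> k)
  (A : algType k) (rhoA : A -> tensor H A) :=
  [/\ is_left_comodule DH eH rhoA,
      forall a b, rhoA (a * b) = talgmul (rhoA a) (rhoA b) &
      rhoA 1 = 1 \ot 1].

Definition is_module_coalgebra (H : algType k) (DH : H -> tensor H H) (eH : H -> k)
  (C : lmodType k) (DC : C -> tensor C C) (eC : C -> k) (actC : C -> H -> C) :=
  [/\ is_coalgebra DC eC,
      is_right_module actC,
      forall c h, DC (actC c h)
        = tlift (fun c1 c2 => tlift (fun h1 h2 => actC c1 h1 \ot actC c2 h2) (DH h)) (DC c) &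
      forall c h, eC (actC c h) = eC c * eH h].

Definition flat (C : lmodType k) : Prop :=
  forall (M N : lmodType k) (f : M -> N), klinear f -> injective f ->
    injective (tmap (@id C) f).

Section Datum.
Variables (H : algType k) (DH : H -> tensor H H) (eH : H -> k)
          (A : algType k) (rhoA : A -> tensor H A)
          (C : lmodType k) (DC : C -> tensor C C) (eC : C -> k)
          (actC : C -> H -> C).

Definition DoiHopf_datum :=
  [/\ is_bialgebra DH eH, is_comodule_algebra DH eH rhoA,
      is_module_coalgebra DH eH DC eC actC & flat C].

Definition is_DH_module (M : lmodType k) (act : M -> A -> M) (coact : M -> tensor C M) :=
  [/\ is_right_module act,
      is_left_comodule DC eC coact &
      forall m a, coact (act m a)
        = tlift (fun c n => tlift (fun h b => actC c h \ot act n b) (rhoA a)) (coact m)].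

Definition is_DH_morphism (M : lmodType k) (actM : M -> A -> M) (coactM : M -> tensor C M)
  (N : lmodType k) (actN : N -> A -> N) (coactN : N -> tensor C N) (f : M -> N) :=
  [/\ klinear f,
      forall m a, f (actM m a) = actN (f m) a &
      forall m, coactN (f m) = tmap id f (coactM m)].

(* the right adjoint G : M_A -> C, G(N) = C (x) N *)
Definition Gact (N : lmodType k) (actN : N -> A -> N) (x : tensor C N) (a : A) :
  tensor C N :=
  tlift (fun c n => tlift (fun h b => actC c h \ot actN n b) (rhoA a)) x.
Definition Gcoact (N : lmodType k) (x : tensor C N) : tensor C (tensor C N) :=
  tlift (fun c n => tlift (fun c1 c2 => c1 \ot (c2 \ot n)) (DC c)) x.

(* a family nu_M : GF(M) = C (x) M -> M, indexed by (raw) structures; only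
   its values on Doi-Hopf modules are constrained *)
Definition GF_family :=
  forall (M : lmodType k), (M -> A -> M) -> (M -> tensor C M) -> tensor C M -> M.

Definition is_natural (nu : GF_family) : Prop :=
  (forall (M : lmodType k) (actM : M -> A -> M) (coactM : M -> tensor C M),
     is_DH_module actM coactM ->
     is_DH_morphism (Gact actM) (@Gcoact M) actM coactM (nu M actM coactM)) /\
  (forall (M : lmodType k) (actM : M -> A -> M) (coactM : M -> tensor C M)
          (N : lmodType k) (actN : N -> A -> N) (coactN : N -> tensor C N) (f : M -> N),
     is_DH_module actM coactM -> is_DH_module actN coactN ->
     is_DH_morphism actM coactM actN coactN f ->
     forall x, nu N actN coactN (tmap id f x) = f (nu M actM coactM x)).

(* the Doi-Hopf module C (x) A = G(A_A) *)
Definition actA (a b : A) : A := a * b.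
Definition nuCA (nu : GF_family) : tensor C (tensor C A) -> tensor C A :=
  nu (tensor C A) (Gact actA) (@Gcoact A).

End Datum.
End DoiHopf.

(* Main.v *)
Require Import Defs.
From HB Require Import structures.
From mathcomp Require Import all_boot all_algebra.
From mathcomp Require Import boolp.
Import GRing.Theory.
Local Open Scope ring_scope.
Set Implicit Arguments. Unset Strict Implicit. Unset Printing Implicit Defensive.

Section TL.
Variable k : comPzRingType.
Implicit Types U V W X : lmodType k.

Lemma kl0 U V (f : U -> V) : klinear f -> f 0 = 0.
Proof.
move=> lf; have E := lf 1 0 0; rewrite !scale1r addr0 in E.
by apply: (addrI (f 0)); rewrite addr0 {3}E.
Qed.
Lemma klD U V (f : U -> V) x y : klinear f -> f (x + y) = f x + f y.
Proof. by move=> lf; have := lf 1 x y; rewrite !scale1r. Qed.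
Lemma klZ U V (f : U -> V) a x : klinear f -> f (a *: x) = a *: f x.
Proof. by move=> lf; have := lf a x 0; rewrite (kl0 lf) !addr0. Qed.
Lemma kl_sum U V (f : U -> V) (I : Type) (r : seq I) (F : I -> U) :
  klinear f -> f (\sum_(i <- r) F i) = \sum_(i <- r) f (F i).
Proof. by move=> lf; apply: (big_morph f (fun x y => klD x y lf) (kl0 lf)). Qed.

Lemma mkbil U V W (f : U -> V -> W) :
  (forall v, klinear (f ^~ v)) -> (forall u, klinear (f u)) -> bilinear_map f.
Proof. by move=> H1 H2; split => *; [apply: H1|apply: H2]. Qed.
Lemma bil_l U V W (f : U -> V -> W) v : bilinear_map f -> klinear (f ^~ v).
Proof. by case=> H1 _ a x y; apply: H1. Qed.
Lemma bil_r U V W (f : U -> V -> W) u : bilinear_map f -> klinear (f u).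
Proof. by case=> _ H2 a x y; apply: H2. Qed.

Lemma tlift_comp U V W W' (f : U -> V -> W) (L : W -> W') x : klinear L ->
  L (tlift f x) = tlift (fun u v => L (f u v)) x.
Proof. by move=> lL; rewrite /tlift /tsum; apply: kl_sum. Qed.

Lemma tlift_fD U V W (f g : U -> V -> W) a x :
  tlift (fun u v => a *: f u v + g u v) x = a *: tlift f x + tlift g x.
Proof. by rewrite /tlift /tsum big_split /= scaler_sumr. Qed.

Lemma tlift_eq U V W (f g : U -> V -> W) x :
  (forall u v, f u v = g u v) -> tlift f x = tlift g x.
Proof. by move=> E; rewrite /tlift /tsum; apply: eq_bigr => p _; apply: E. Qed.

Lemma tlift_swap U V U' V' W (F : U -> V -> U' -> V' -> W) x y :
  tlift (fun u v => tlift (F u v) y) x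
  = tlift (fun u' v' => tlift (fun u v => F u v u' v') x) y.
Proof. by rewrite /tlift /tsum; apply: exchange_big. Qed.

Lemma tlift_tmul U V W (f : U -> V -> W) u v : bilinear_map f ->
  tlift f (u \ot v) = f u v.
Proof. by move=> bf; rewrite /tlift /tmul tsum_pi // /tsum big_cons big_nil addr0. Qed.

Lemma kl_tlift U V W (f : U -> V -> W) : bilinear_map f -> klinear (tlift f).
Proof. by move=> bf a x y; rewrite tliftD // tliftZ. Qed.

Lemma bil_tmul U V : bilinear_map (@tmul k U V).
Proof.
split=> a u u' v; apply: tensor_ext => W f bf;
  rewrite (kl_tlift bf) !tlift_tmul //; [apply: (bil_l _ bf)| apply: (bil_r _ bf)].
Qed.

Lemma tlift_id U V (x : tensor U V) : tlift tmul x = x.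
Proof.
apply: tensor_ext => W f bf; rewrite tlift_comp; last exact: kl_tlift.
by apply: tlift_eq => u v; rewrite tlift_tmul.
Qed.

Lemma lin_ext U V W (L1 L2 : tensor U V -> W) x : klinear L1 -> klinear L2 ->
  (forall u v, L1 (u \ot v) = L2 (u \ot v)) -> L1 x = L2 x.
Proof.
move=> l1 l2 E; rewrite -[x]tlift_id !tlift_comp //; exact: tlift_eq.
Qed.

Lemma kl_id U : klinear (@id U). Proof. by []. Qed.
Lemma kl_comp U V W (f : U -> V) (g : V -> W) : klinear f -> klinear g ->
  klinear (fun x => g (f x)).
Proof. by move=> lf lg a x y; rewrite lf lg. Qed.
Lemma kl_tmull U V (v : V) : klinear (fun u : U => u \ot v).
Proof. exact: (bil_l _ (@bil_tmul U V)). Qed.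
Lemma kl_tmulr U V (u : U) : klinear (fun v : V => u \ot v).
Proof. exact: (bil_r _ (@bil_tmul U V)). Qed.
Lemma kl_tparam X U V W (G : X -> U -> V -> W) y :
  (forall u v, klinear (fun x => G x u v)) -> klinear (fun x => tlift (G x) y).
Proof.
move=> H a x x'; rewrite -tlift_fD; apply: tlift_eq => u v; exact: H.
Qed.
Lemma bil_map U V U' V' (f : U -> U') (g : V -> V') : klinear f -> klinear g ->
  bilinear_map (fun u v => f u \ot g v).
Proof.
move=> lf lg; apply: mkbil => [v|u].
  exact: (kl_comp (g := fun z => z \ot g v) lf (kl_tmull _)).
exact: (kl_comp (g := fun z => f u \ot z) lg (kl_tmulr _)).
Qed.
Lemma kl_tmap U V U' V' (f : U -> U') (g : V -> V') : klinear f -> klinear g ->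
  klinear (tmap f g).
Proof. by move=> lf lg; apply: kl_tlift; apply: bil_map. Qed.
Lemma tmap_tmul U V U' V' (f : U -> U') (g : V -> V') u v : klinear f -> klinear g ->
  tmap f g (u \ot v) = f u \ot g v.
Proof. by move=> lf lg; rewrite /tmap tlift_tmul //; apply: bil_map. Qed.
Lemma kl_tl U V W (f : W -> U) (v : V) : klinear f -> klinear (fun x => f x \ot v).
Proof. by move=> lf; exact: (kl_comp (g := fun z => z \ot v) lf (kl_tmull _)). Qed.
Lemma kl_tr U V W (f : W -> V) (u : U) : klinear f -> klinear (fun x => u \ot f x).
Proof. by move=> lf; exact: (kl_comp (g := fun z => u \ot z) lf (kl_tmulr _)). Qed.
Lemma tmulr_tlift U V U' V' (u : U) (f : U' -> V' -> V) x :
  u \ot tlift f x = tlift (fun a b => u \ot f a b) x.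
Proof. exact: (tlift_comp _ _ (kl_tmulr u)). Qed.
End TL.
Section DHS.
Variables (k : comPzRingType) (H : algType k) (DH : H -> tensor H H) (eH : H -> k)
  (A : algType k) (rhoA : A -> tensor H A)
  (C : lmodType k) (DC : C -> tensor C C) (eC : C -> k) (actC : C -> H -> C).
Hypothesis datum : DoiHopf_datum DH eH rhoA DC eC actC.

Lemma tlift_tlift (U V U' V' W : lmodType k) (f : U' -> V' -> W) (g : U -> V -> tensor U' V') y :
  bilinear_map f -> tlift f (tlift g y) = tlift (fun u v => tlift f (g u v)) y.
Proof. by move=> bf; apply: tlift_comp; apply: kl_tlift. Qed.

Lemma rhoA_lin : klinear rhoA. Proof. by case: datum => _ [[]]. Qed.
Lemma rhoA_coass a : tlift (fun h b => tlift (fun h1 h2 => h1 \ot (h2 \ot b)) (DH h)) (rhoA a)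
   = tlift (fun h b => h \ot rhoA b) (rhoA a).
Proof. by case: datum => _ [[_ E _] _ _] _ _. Qed.
Lemma rhoA_mul a b : rhoA (a * b) = talgmul (rhoA a) (rhoA b).
Proof. by case: datum => _ [_ E _] _ _. Qed.
Lemma rhoA1 : rhoA 1 = 1 \ot 1.
Proof. by case: datum => _ [_ _ E] _ _. Qed.
Lemma DC_lin : klinear DC. Proof. by case: datum => _ _ [[]]. Qed.
Lemma eC_form : kform eC. Proof. by case: datum => _ _ [[]]. Qed.
Lemma DC_coass c : tlift (fun c1 c2 => tlift (fun d1 d2 => d1 \ot (d2 \ot c2)) (DC c1)) (DC c)
              = tlift (fun c1 c2 => c1 \ot DC c2) (DC c).
Proof. by case: datum => _ _ [[_ _ E _ _] _ _ _] _. Qed.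
Lemma DC_counit c : tlift (fun c1 c2 => eC c1 *: c2) (DC c) = c.
Proof. by case: datum => _ _ [[_ _ _ E _] _ _ _] _. Qed.
Lemma actC_l h : klinear (actC ^~ h).
Proof. by case: datum => _ _ [_ [E _ _ _] _ _] _ a x y; apply: E. Qed.
Lemma actC_r c : klinear (actC c).
Proof. by case: datum => _ _ [_ [_ E _ _] _ _] _ a x y; apply: E. Qed.
Lemma actC_mul c g h : actC c (g * h) = actC (actC c g) h.
Proof. by case: datum => _ _ [_ [_ _ E _] _ _] _. Qed.
Lemma actC1 c : actC c 1 = c.
Proof. by case: datum => _ _ [_ [_ _ _ E] _ _] _. Qed.
Lemma DC_act c h : DC (actC c h)
  = tlift (fun c1 c2 => tlift (fun h1 h2 => actC c1 h1 \ot actC c2 h2) (DH h)) (DC c).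
Proof. by case: datum => _ _ [_ _ E _] _. Qed.

Section Mod.
Variables (N : lmodType k) (actN : N -> A -> N).
Hypothesis modN : is_right_module actN.
Lemma actN_l a : klinear (actN ^~ a).
Proof. by case: modN => E _ _ _ t x y; apply: E. Qed.
Lemma actN_r n : klinear (actN n).
Proof. by case: modN => _ E _ _ t x y; apply: E. Qed.
Lemma actN_mul n a b : actN n (a * b) = actN (actN n a) b.
Proof. by case: modN. Qed.
Lemma actN1 n : actN n 1 = n.
Proof. by case: modN. Qed.

Lemma bil_inner c n : bilinear_map (fun h b => actC c h \ot actN n b).
Proof. exact: bil_map (actC_r c) (actN_r n). Qed.

Lemma bil_Gact a : bilinear_map (fun c n => tlift (fun h b => actC c h \ot actN n b) (rhoA a)).
Proof.
apply: mkbil => [n|c]; apply: kl_tparam => h b.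
  exact: (kl_comp (g := fun z => z \ot actN n b) (actC_l h) (kl_tmull _)).
exact: (kl_comp (g := fun z => actC c h \ot z) (actN_l b) (kl_tmulr _)).
Qed.

Lemma kl_Gact a : klinear (fun x => Gact rhoA actC actN x a).
Proof. exact: kl_tlift (bil_Gact a). Qed.
Lemma Gact_tmul c n a : Gact rhoA actC actN (c \ot n) a
  = tlift (fun h b => actC c h \ot actN n b) (rhoA a).
Proof. exact: tlift_tmul (bil_Gact a). Qed.
Lemma Gact_tlift (U V : lmodType k) (f : U -> V -> tensor C N) y a :
  Gact rhoA actC actN (tlift f y) a = tlift (fun u v => Gact rhoA actC actN (f u v) a) y.
Proof. exact: (tlift_comp _ _ (kl_Gact a)). Qed.

Lemma Gact_mod : is_right_module (Gact rhoA actC actN).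
Proof.
split.
- by move=> t x y a; apply: kl_Gact.
- move=> t x a b; rewrite /Gact -tlift_fD; apply: tlift_eq => c n.
  by rewrite rhoA_lin; apply: kl_tlift; apply: bil_inner.
- move=> x a b.
  apply: (lin_ext (L1 := fun x => Gact rhoA actC actN x (a * b))
                  (L2 := fun x => Gact rhoA actC actN (Gact rhoA actC actN x a) b)).
  + exact: kl_Gact.
  + exact: kl_comp (kl_Gact a) (kl_Gact b).
  move=> c n /=; rewrite [Gact _ _ _ (c \ot n) a]Gact_tmul Gact_tlift Gact_tmul rhoA_mul /talgmul tlift_tlift; last exact: bil_inner.
  apply: tlift_eq => h a'; rewrite Gact_tmul tlift_tlift; last exact: bil_inner.
  apply: tlift_eq => h' b'; rewrite tlift_tmul; last exact: bil_inner.
  by rewrite actC_mul actN_mul.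
- move=> x.
  apply: (lin_ext (L1 := fun x => Gact rhoA actC actN x 1) (L2 := id)).
  + exact: kl_Gact.
  + exact: kl_id.
  move=> c n /=; rewrite Gact_tmul rhoA1 tlift_tmul; last exact: bil_inner.
  by rewrite actC1 actN1.
Qed.
End Mod.

Lemma bil_Gco (N : lmodType k) :
  bilinear_map (fun (c : C) (n : N) => tlift (fun c1 c2 => c1 \ot (c2 \ot n)) (DC c)).
Proof.
apply: mkbil => [n|c].
  exact: (kl_comp DC_lin (kl_tlift (bil_map (@kl_id _ C) (kl_tmull n)))).
apply: kl_tparam => c1 c2.
exact: (kl_comp (kl_tmulr c2) (kl_tmulr c1)).
Qed.
Lemma kl_Gco (N : lmodType k) : klinear (@Gcoact k C DC N).
Proof. exact: kl_tlift (bil_Gco N). Qed.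
Lemma Gco_tmul (N : lmodType k) c (n : N) :
  Gcoact DC (c \ot n) = tlift (fun c1 c2 => c1 \ot (c2 \ot n)) (DC c).
Proof. exact: tlift_tmul (bil_Gco N). Qed.
Lemma Gco_tlift (U V N : lmodType k) (f : U -> V -> tensor C N) y :
  Gcoact DC (tlift f y) = tlift (fun u v => Gcoact DC (f u v)) y.
Proof. by apply: tlift_comp; apply: kl_Gco. Qed.

Lemma bil_eC (N : lmodType k) : bilinear_map (fun (c : C) (n : N) => eC c *: n).
Proof.
apply: mkbil => [n|c] a x y.
  by rewrite eC_form scalerDl scalerA.
by rewrite scalerDr !scalerA mulrC.
Qed.

Lemma Gco_comod (N : lmodType k) : is_left_comodule DC eC (@Gcoact k C DC N).
Proof.
split.
- exact: kl_Gco.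
- move=> m.
  apply: (lin_ext (L1 := fun m => Gcoact DC (Gcoact DC m))
                  (L2 := fun m => tlift (fun c n => c \ot Gcoact DC n) (Gcoact DC m))).
  + apply: kl_comp; apply: kl_Gco.
  + apply: kl_comp; first exact: kl_Gco. apply: kl_tlift; apply: bil_map; [exact: kl_id| exact: kl_Gco].
  move=> c n.
  rewrite Gco_tmul Gco_tlift tlift_tlift; last first.
    apply: bil_map; [exact: kl_id| exact: kl_Gco].
  have lT : klinear (tmap (@id C) (tmap (@id C) (fun z : C => z \ot n))).
    apply: kl_tmap; [exact: kl_id| apply: kl_tmap; [exact: kl_id| exact: kl_tmull]].
  transitivity (tmap (@id C) (tmap (@id C) (fun z : C => z \ot n))
     (tlift (fun c1 c2 : C => tlift (fun d1 d2 : C => d1 \ot d2 \ot c2) (DC c1)) (DC c))).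
    rewrite (tlift_comp _ _ lT); apply: tlift_eq => u v.
    rewrite Gco_tmul (tlift_comp _ _ lT); apply: tlift_eq => d1 d2.
    rewrite !tmap_tmul //; [exact: kl_tmull | apply: kl_tmap; [exact: kl_id| exact: kl_tmull]].
  rewrite DC_coass (tlift_comp _ _ lT); apply: tlift_eq => u v.
  rewrite tmap_tmul; [|exact: kl_id|apply: kl_tmap; [exact: kl_id| exact: kl_tmull]].
  rewrite tlift_tmul; last by apply: bil_map; [exact: kl_id| exact: kl_Gco].
  by rewrite Gco_tmul.
- move=> m.
  apply: (lin_ext (L1 := fun m => tlift (fun c y => eC c *: y) (Gcoact DC m)) (L2 := id)).
  + apply: kl_comp; [exact: kl_Gco| apply: kl_tlift; exact: bil_eC].
  + exact: kl_id.
  move=> c n /=; rewrite Gco_tmul tlift_tlift; last exact: bil_eC.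
  transitivity ((tlift (fun c1 c2 => eC c1 *: c2) (DC c)) \ot n); last by rewrite DC_counit.
  rewrite (tlift_comp _ _ (kl_tmull n)); apply: tlift_eq => u v.
  rewrite tlift_tmul; last exact: bil_eC.
  by rewrite (klZ _ _ (kl_tmull n)).
Qed.

Lemma G_DH (N : lmodType k) (actN : N -> A -> N) : is_right_module actN ->
  is_DH_module rhoA DC eC actC (Gact rhoA actC actN) (@Gcoact k C DC N).
Proof.
move=> modN; split; [exact: Gact_mod | exact: Gco_comod |].
move=> x a.
have bF : bilinear_map (fun (c : C) (y : tensor C N) =>
     tlift (fun h b => actC c h \ot Gact rhoA actC actN y b) (rhoA a)).
  apply: mkbil => [y|c]; apply: kl_tparam => h b.
    exact: (kl_comp (g := fun z => z \ot _) (actC_l h) (kl_tmull _)).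
  exact: (kl_comp (g := fun z => actC c h \ot z) (kl_Gact modN b) (kl_tmulr _)).
apply: (lin_ext (L1 := fun x => Gcoact DC (Gact rhoA actC actN x a))
   (L2 := fun x => tlift (fun (c : C) (y : tensor C N) =>
     tlift (fun h b => actC c h \ot Gact rhoA actC actN y b) (rhoA a)) (Gcoact DC x))).
+ apply: kl_comp; [exact: kl_Gact | exact: kl_Gco].
+ apply: kl_comp; [exact: kl_Gco | exact: kl_tlift].
move=> c n /=.
transitivity (tlift (fun c1 c2 => tlift (fun h b => tlift (fun h1 h2 =>
   actC c1 h1 \ot (actC c2 h2 \ot actN n b)) (DH h)) (rhoA a)) (DC c)).
  rewrite tlift_swap Gact_tmul // Gco_tlift; apply: tlift_eq => h b.
  rewrite Gco_tmul DC_act tlift_tlift; last first.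
    by apply: bil_map; [exact: kl_id| exact: kl_tmull].
  apply: tlift_eq => c1 c2; rewrite tlift_tlift; last first.
    by apply: bil_map; [exact: kl_id| exact: kl_tmull].
  apply: tlift_eq => h1 h2; rewrite tlift_tmul //.
  by apply: bil_map; [exact: kl_id| exact: kl_tmull].
apply: esym; rewrite Gco_tmul tlift_tlift //; apply: tlift_eq => c1 c2.
rewrite tlift_tmul //.
have bT : bilinear_map (fun (h : H) (y : tensor H A) =>
   actC c1 h \ot tlift (fun h' b' => actC c2 h' \ot actN n b') y).
  apply: mkbil => [y|h].
    by apply: kl_tl; apply: actC_r.
  by apply: kl_tr; apply: kl_tlift; apply: bil_inner.
transitivity (tlift (fun (h : H) (y : tensor H A) =>
   actC c1 h \ot tlift (fun h' b' => actC c2 h' \ot actN n b') y)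
   (tlift (fun h b => h \ot rhoA b) (rhoA a))).
  rewrite tlift_tlift //; apply: tlift_eq => h b.
  by rewrite tlift_tmul // Gact_tmul.
rewrite -rhoA_coass tlift_tlift //; apply: tlift_eq => h b.
rewrite tlift_tlift //; apply: tlift_eq => h1 h2.
by rewrite tlift_tmul // tlift_tmul //; exact: bil_inner.
Qed.

Lemma actA_mod : is_right_module (@actA k A).
Proof.
rewrite /actA; split.
- by move=> t x y a; rewrite mulrDl scalerAl.
- by move=> t x a b; rewrite mulrDr scalerAr.
- by move=> x a b; rewrite mulrA.
- by move=> x; rewrite mulr1.
Qed.

Lemma part1 (nu : GF_family A C) (nu_nat : is_natural rhoA DC eC actC nu)
  (M : lmodType k) (actM : M -> A -> M) (coactM : M -> tensor C M) :
  is_DH_module rhoA DC eC actC actM coactM ->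
  forall (m : M) (c : C),
       nu M actM coactM (c \ot m)
       = tlift (fun (c' : C) (n : M) =>
                  actM n (tlift (fun (d : C) (a : A) => eC d *: a)
                            (nuCA rhoA DC actC nu (c \ot (c' \ot 1)))))
               (coactM m).
Proof.
move=> hM m c; case: nu_nat => nat1 nat2.
have [modM [lco coass counit] compat] := hM.
have hGM := G_DH modM.
have hGA := G_DH actA_mod.
have [lnuGM _ _] := nat1 _ _ _ hGM.
have mcoact : is_DH_morphism actM coactM (Gact rhoA actC actM) (@Gcoact k C DC M) coactM.
  by split.
have E2 := nat2 _ _ _ _ _ _ _ hM hGM mcoact (c \ot m).
rewrite -[LHS]counit -E2 tmap_tmul; [|exact: kl_id|exact: lco].
rewrite -{1}[coactM m]tlift_id tmulr_tlift (tlift_comp _ _ lnuGM) tlift_tlift;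
  last exact: bil_eC.
apply: tlift_eq => c' n.
have lpsi : klinear (actM n) := actN_r modM n.
have lPhi : klinear (tmap (@id C) (actM n)) by apply: kl_tmap; [exact: kl_id|].
have mPhi : is_DH_morphism (Gact rhoA actC (@actA k A)) (@Gcoact k C DC A)
     (Gact rhoA actC actM) (@Gcoact k C DC M) (tmap (@id C) (actM n)).
  split; first exact: lPhi.
  - move=> x a.
    apply: (lin_ext (L1 := fun x => tmap (@id C) (actM n) (Gact rhoA actC (@actA k A) x a))
       (L2 := fun x => Gact rhoA actC actM (tmap (@id C) (actM n) x) a)).
    + apply: kl_comp; [exact: kl_Gact actA_mod a| exact: lPhi].
    + apply: kl_comp; [exact: lPhi| exact: kl_Gact modM a].
    move=> c1 b /=; rewrite Gact_tmul; last exact: actA_mod.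
    rewrite tmap_tmul //.
    rewrite Gact_tmul // (tlift_comp _ _ lPhi); apply: tlift_eq => h b'.
    by rewrite tmap_tmul // /actA actN_mul.
  - move=> x; apply: (lin_ext (L1 := fun x => Gcoact DC (tmap (@id C) (actM n) x))
       (L2 := fun x => tmap (@id C) (tmap (@id C) (actM n)) (Gcoact DC x))).
    + apply: kl_comp; [exact: lPhi| exact: kl_Gco].
    + apply: kl_comp; [exact: kl_Gco| apply: kl_tmap; [exact: kl_id| exact: lPhi]].
    move=> c1 b /=; rewrite tmap_tmul //.
    rewrite !Gco_tmul (tlift_comp _ _ (kl_tmap (@kl_id _ C) lPhi)); apply: tlift_eq => d1 d2.
    by rewrite !tmap_tmul //; apply: kl_tmap.
have E3 := nat2 _ _ _ _ _ _ _ hGA hGM mPhi (c \ot (c' \ot 1)).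
rewrite tmap_tmul //= in E3; try exact: kl_tmap.
rewrite tmap_tmul // actN1 // in E3.
rewrite E3 /nuCA /tmap tlift_tlift; last exact: bil_eC.
rewrite (tlift_comp _ _ lpsi); apply: tlift_eq => d a.
rewrite tlift_tmul; last exact: bil_eC.
by rewrite /= (klZ _ _ lpsi).
Qed.
End DHS.

Theorem lemma2p1p2 (k : comPzRingType)
  (H : algType k) (DH : H -> tensor H H) (eH : H -> k)
  (A : algType k) (rhoA : A -> tensor H A)
  (C : lmodType k) (DC : C -> tensor C C) (eC : C -> k) (actC : C -> H -> C)
  (datum : DoiHopf_datum DH eH rhoA DC eC actC)
  (hopfH : is_hopf DH eH)
  (nu : GF_family A C)
  (nu_nat : is_natural rhoA DC eC actC nu) :
  (forall (M : lmodType k) (actM : M -> A -> M) (coactM : M -> tensor C M),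
     is_DH_module rhoA DC eC actC actM coactM ->
     forall (m : M) (c : C),
       nu M actM coactM (c \ot m)
       = tlift (fun (c' : C) (n : M) =>
                  actM n (tlift (fun (d : C) (a : A) => eC d *: a)
                            (nuCA rhoA DC actC nu (c \ot (c' \ot 1)))))
               (coactM m)) /\
  (forall nu' : GF_family A C, is_natural rhoA DC eC actC nu' ->
     (forall x, nuCA rhoA DC actC nu' x = nuCA rhoA DC actC nu x) ->
     forall (M : lmodType k) (actM : M -> A -> M) (coactM : M -> tensor C M),
       is_DH_module rhoA DC eC actC actM coactM ->
       forall x, nu' M actM coactM x = nu M actM coactM x).
Proof.
split; first exact: (part1 datum nu_nat).
move=> nu' nat' agree M actM coactM hM x.
have [l' _ _] := nat'.1 _ _ _ hM.
have [l _ _] := nu_nat.1 _ _ _ hM.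
apply: lin_ext => // c m.
rewrite (part1 datum nat' hM) (part1 datum nu_nat hM).
by apply: tlift_eq => c' n; rewrite agree.
Qed.
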